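(* In the full-information setting, let $\beta=\frac1K$ and run Gaptron with gap map $a(\mathbf W_t,\mathbf x_t)=1-\max\{\mathbb 1[m_t^\star>\beta],\,m_t^\star\}$, learning rate $\eta=\frac{1-\beta}{KX^2}$, exploration rate $\gamma=0$, and the multiclass hinge loss $$\ell_t(\mathbf W)=\begin{cases}\max\{1-m_t(\mathbf W,y_t),0\}&\text{if } m_t^\star\le\beta,\\ \max\{1-m_t(\mathbf W,y_t),0\}&\text{if } y_t^\star\ne y_t\text{ and } m_t^\star>\beta,\\ 0&\text{if } y_t^\star=y_t\text{ and } m_t^\star>\beta.\end{cases}$$ Then for every $\mathbf U\in\mathcal W$, $$\mathbb E\Big[\sum_{t=1}^T\mathbb 1[y'_t\ne y_t]\Big]\le\sum_{t=1}^T\ell_t(\mathbf U)+\frac{K^2X^2\|\mathbf U\|^2}{2(K-1)}.$$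
   Context: Setting and notation. Fix integers $K\ge 2$, $d\ge1$, $T\ge1$ and reals $X>0$, $D>0$. Matrices $\mathbf W\in\mathbb{R}^{K\times d}$ have rows $\mathbf W^1,\dots,\mathbf W^K\in\mathbb{R}^d$ and are identified with vectors in $\mathbb{R}^{Kd}$; $\langle\cdot,\cdot\rangle$ is the Euclidean inner product and $\|\cdot\|$ the Euclidean (Frobenius) norm. $\mathcal W=\{\mathbf W:\|\mathbf W\|\le D\}$. $\mathbf e_k$ is the $k$-th standard basis vector of $\mathbb R^K$ and $\mathbf 1\in\mathbb R^K$ the all-ones vector. In each round $t=1,\dots,T$ the environment chooses a label $y_t\in\{1,\dots,K\}$ and a feature vector $\mathbf x_t\in\mathbb R^d$ with $\|\mathbf x_t\|\le X$ (possibly depending on the learner's past predictions $y'_1,\dots,y'_{t-1}$ but not on its current random draw); the learner sees $\mathbf x_t$, outputs a random label $y'_t$, and then observes $y_t$ (full-information setting) or only $\mathbb 1[y'_t\ne y_t]$ (bandit setting). Gaptron, with learning rate $\eta>0$, exploration rate $\gamma\in[0,1]$, gap map $a:\mathbb R^{K\times d}\times\mathbb R^d\to[0,1]$ and loss functions $\ell_t$: set $\mathbf W_1=\mathbf 0$; for $t=1,\dots,T$: let $y_t^\star=\arg\max_k\langle \mathbf W_t^k,\mathbf x_t\rangle$ (ties broken arbitrarily), $a_t=a(\mathbf W_t,\mathbf x_t)$, $\mathbf p'_t=(1-\max\{a_t,\gamma\})\mathbf e_{y_t^\star}+\max\{a_t,\gamma\}\frac1K\mathbf 1$; draw $y'_t\sim\mathbf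 p'_t$ ($p'_t(k)$ denotes the probability of label $k$); set $\mathbf g_t=\nabla\ell_t(\mathbf W_t)$; update $\mathbf W_{t+1}=\arg\min_{\mathbf W\in\mathcal W}\ \eta\langle\mathbf g_t,\mathbf W\rangle+\frac12\|\mathbf W-\mathbf W_t\|^2$. $\mathbb E$ denotes expectation over the learner's randomization. Margins: $m_t(\mathbf W,y)=\langle\mathbf W^y,\mathbf x_t\rangle-\max_{k\ne y}\langle\mathbf W^k,\mathbf x_t\rangle$ and $m_t^\star=\max_k m_t(\mathbf W_t,k)$, where $\mathbf W_t$ is Gaptron's current iterate; in the definition of $\ell_t$ the case distinction uses $y_t^\star$ and $m_t^\star$ computed from $\mathbf W_t$, so $\ell_t$ is, as a function of $\mathbf W$, either $\max\{1-m_t(\mathbf W,y_t),0\}$ or identically $0$. The gradient used is $\mathbf g_t=(\mathbf e_{\tilde k}-\mathbf e_{y_t})\otimes\mathbf x_t$ with $\tilde k=\arg\max_{k\ne y_t}\langle\mathbf W_t^k,\mathbf x_t\rangle$ in the first two cases and $\mathbf g_t=\mathbf 0$ in the third, where $\mathbf v\otimes\mathbf x$ is the $K\times d$ matrix with rows $v_k\mathbf x$. *)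

(* Defs.v *)
From mathcomp Require Import all_boot all_order all_algebra.
From mathcomp Require Import reals.
Set Implicit Arguments. Unset Strict Implicit. Unset Printing Implicit Defensive.
Import Order.TTheory GRing.Theory Num.Theory.
Local Open Scope ring_scope.

(* Matrices W : 'M[R]_(K,d) (row k = W^k), features x : 'rV[R]_d,
   labels in 'I_K (label k+1 of the paper is the ordinal k). *)

Definition frob (R : realType) (K d : nat) (A B : 'M[R]_(K, d)) : R :=
  \sum_(i < K) \sum_(j < d) A i j * B i j.
Definition sqnorm (R : realType) (K d : nat) (A : 'M[R]_(K, d)) : R := frob A A.
Definition vsqnorm (R : realType) (d : nat) (x : 'rV[R]_d) : R :=
  \sum_(j < d) x 0 j ^+ 2.

Definition score (R : realType) (K d : nat) (W : 'M[R]_(K, d)) (x : 'rV[R]_d)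
  (k : 'I_K) : R := \sum_(j < d) W k j * x 0 j.

(* max_{i : P i} F i ; the seed  -(sum |F i|)  is below every F i, so this is
   the true maximum whenever P is nonempty (always the case below, K >= 2). *)
Definition fmax (R : realType) (K : nat) (P : pred 'I_K) (F : 'I_K -> R) : R :=
  \big[Num.max/ - \sum_(i < K | P i) `|F i|]_(i < K | P i) F i.

Definition margin (R : realType) (K d : nat) (W : 'M[R]_(K, d)) (x : 'rV[R]_d)
  (y : 'I_K) : R := score W x y - fmax (fun k => k != y) (score W x).

Definition mstar (R : realType) (K d : nat) (W : 'M[R]_(K, d)) (x : 'rV[R]_d) : R :=
  fmax predT (margin W x).

Definition hinge (R : realType) (K d : nat) (x : 'rV[R]_d) (y : 'I_K)
  (U : 'M[R]_(K, d)) : R := Num.max (1 - margin U x y) 0.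

Definition gbeta (R : realType) (K : nat) : R := 1 / K%:R.
Definition geta (R : realType) (K : nat) (X : R) : R :=
  (1 - gbeta R K) / (K%:R * X ^+ 2).

(* tie-breaking rules: ys W x is an argmax_k <W^k,x>;
   kt W x y is an argmax_{k<>y} <W^k,x>  *)
Definition is_argmax_rule (R : realType) (K d : nat)
  (ys : 'M[R]_(K, d) -> 'rV[R]_d -> 'I_K) : Prop :=
  forall W x k, score W x k <= score W x (ys W x).
Definition is_argmax_other_rule (R : realType) (K d : nat)
  (kt : 'M[R]_(K, d) -> 'rV[R]_d -> 'I_K -> 'I_K) : Prop :=
  forall W x y, kt W x y != y /\
    forall k, k != y -> score W x k <= score W x (kt W x y).

Definition is_prox_update (R : realType) (K d : nat) (eta D : R)
  (upd : 'M[R]_(K, d) -> 'M[R]_(K, d) -> 'M[R]_(K, d)) : Prop :=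
  forall W G, sqnorm (upd W G) <= D ^+ 2 /\
    forall V, sqnorm V <= D ^+ 2 ->
      eta * frob G (upd W G) + 2^-1 * sqnorm (upd W G - W)
      <= eta * frob G V + 2^-1 * sqnorm (V - W).

(* first two cases of the definition of l_t (where l_t is the hinge) *)
Definition active (R : realType) (K d : nat)
  (ys : 'M[R]_(K, d) -> 'rV[R]_d -> 'I_K)
  (W : 'M[R]_(K, d)) (x : 'rV[R]_d) (y : 'I_K) : bool :=
  (mstar W x <= gbeta R K) || (ys W x != y).

Definition loss (R : realType) (K d : nat)
  (ys : 'M[R]_(K, d) -> 'rV[R]_d -> 'I_K)
  (W : 'M[R]_(K, d)) (x : 'rV[R]_d) (y : 'I_K) (U : 'M[R]_(K, d)) : R :=
  if active ys W x y then hinge x y U else 0.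

Definition grad (R : realType) (K d : nat)
  (ys : 'M[R]_(K, d) -> 'rV[R]_d -> 'I_K)
  (kt : 'M[R]_(K, d) -> 'rV[R]_d -> 'I_K -> 'I_K)
  (W : 'M[R]_(K, d)) (x : 'rV[R]_d) (y : 'I_K) : 'M[R]_(K, d) :=
  if active ys W x y then
    \matrix_(i < K, j < d) (((i == kt W x y)%:R - (i == y)%:R) * x 0 j)
  else 0.

Definition gap (R : realType) (K d : nat) (W : 'M[R]_(K, d)) (x : 'rV[R]_d) : R :=
  1 - Num.max ((gbeta R K < mstar W x)%R)%:R (mstar W x).

Definition pprob (R : realType) (K d : nat) (gamma : R)
  (ys : 'M[R]_(K, d) -> 'rV[R]_d -> 'I_K)
  (W : 'M[R]_(K, d)) (x : 'rV[R]_d) (k : 'I_K) : R :=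
  let c := Num.max (gap W x) gamma in
  (1 - c) * (k == ys W x)%:R + c / K%:R.

(* The adaptive environment: given the learner's past predictions h
   (a sequence of length t-1), it chooses x_t = xe h and y_t = ye h.
   Witer n h = W_{n+1} (0-indexed round n), computed along the history h;
   it only depends on the first n entries of h. *)
Fixpoint Witer (R : realType) (K d : nat)
  (xe : seq 'I_K -> 'rV[R]_d) (ye : seq 'I_K -> 'I_K)
  (ys : 'M[R]_(K, d) -> 'rV[R]_d -> 'I_K)
  (kt : 'M[R]_(K, d) -> 'rV[R]_d -> 'I_K -> 'I_K)
  (upd : 'M[R]_(K, d) -> 'M[R]_(K, d) -> 'M[R]_(K, d))
  (n : nat) (h : seq 'I_K) : 'M[R]_(K, d) :=
  match n with
  | 0 => 0
  | n'.+1 =>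
      let W := Witer xe ye ys kt upd n' h in
      let hp := take n' h in
      upd W (grad ys kt W (xe hp) (ye hp))
  end.

Definition path_prob (R : realType) (K d T : nat) (gamma : R)
  (xe : seq 'I_K -> 'rV[R]_d) (ye : seq 'I_K -> 'I_K)
  (ys : 'M[R]_(K, d) -> 'rV[R]_d -> 'I_K)
  (kt : 'M[R]_(K, d) -> 'rV[R]_d -> 'I_K -> 'I_K)
  (upd : 'M[R]_(K, d) -> 'M[R]_(K, d) -> 'M[R]_(K, d))
  (h : T.-tuple 'I_K) : R :=
  \prod_(t < T) pprob gamma ys (Witer xe ye ys kt upd t h) (xe (take t h)) (tnth h t).

Definition Expect (R : realType) (K d T : nat) (gamma : R)
  (xe : seq 'I_K -> 'rV[R]_d) (ye : seq 'I_K -> 'I_K)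
  (ys : 'M[R]_(K, d) -> 'rV[R]_d -> 'I_K)
  (kt : 'M[R]_(K, d) -> 'rV[R]_d -> 'I_K -> 'I_K)
  (upd : 'M[R]_(K, d) -> 'M[R]_(K, d) -> 'M[R]_(K, d))
  (f : T.-tuple 'I_K -> R) : R :=
  \sum_(h : T.-tuple 'I_K) path_prob gamma xe ye ys kt upd h * f h.

Definition mistakes (R : realType) (K T : nat) (ye : seq 'I_K -> 'I_K)
  (h : T.-tuple 'I_K) : R :=
  \sum_(t < T) (tnth h t != ye (take t h))%:R.

Definition cum_loss (R : realType) (K d T : nat)
  (xe : seq 'I_K -> 'rV[R]_d) (ye : seq 'I_K -> 'I_K)
  (ys : 'M[R]_(K, d) -> 'rV[R]_d -> 'I_K)
  (kt : 'M[R]_(K, d) -> 'rV[R]_d -> 'I_K -> 'I_K)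
  (upd : 'M[R]_(K, d) -> 'M[R]_(K, d) -> 'M[R]_(K, d))
  (U : 'M[R]_(K, d)) (h : T.-tuple 'I_K) : R :=
  \sum_(t < T) loss ys (Witer xe ye ys kt upd t h) (xe (take t h)) (ye (take t h)) U.

(* Main.v *)
Require Import Defs.
From mathcomp Require Import all_boot all_order all_algebra.
From mathcomp Require Import reals.
From mathcomp Require Import ring lra.
Import Order.TTheory GRing.Theory Num.Theory.
Local Open Scope ring_scope.
Set Implicit Arguments. Unset Strict Implicit.

Section Frob.
Variables (R : realType) (K d : nat).
Implicit Types A B C : 'M[R]_(K, d).

Lemma frobDl A B C : frob (A + B) C = frob A C + frob B C.
Proof.
rewrite /frob -big_split; apply eq_bigr => i _.
rewrite -big_split; apply eq_bigr => j _; by rewrite mxE mulrDl.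
Qed.

Lemma frobC A B : frob A B = frob B A.
Proof. rewrite /frob; apply eq_bigr => i _; apply eq_bigr => j _; exact: mulrC. Qed.

Lemma frobDr A B C : frob C (A + B) = frob C A + frob C B.
Proof. by rewrite frobC frobDl !(frobC C). Qed.

Lemma frobZl a A B : frob (a *: A) B = a * frob A B.
Proof.
rewrite /frob mulr_sumr; apply eq_bigr => i _.
rewrite mulr_sumr; apply eq_bigr => j _; by rewrite mxE mulrA.
Qed.

Lemma frobZr a A B : frob B (a *: A) = a * frob B A.
Proof. by rewrite frobC frobZl frobC. Qed.

Lemma frobNl A B : frob (- A) B = - frob A B.
Proof.
rewrite /frob -sumrN; apply eq_bigr => i _.
rewrite -sumrN; apply eq_bigr => j _; by rewrite mxE mulNr.
Qed.

Lemma frobNr A B : frob B (- A) = - frob B A.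
Proof. by rewrite frobC frobNl frobC. Qed.

Lemma frobBl A B C : frob (A - B) C = frob A C - frob B C.
Proof. by rewrite frobDl frobNl. Qed.

Lemma frobBr A B C : frob C (A - B) = frob C A - frob C B.
Proof. by rewrite frobDr frobNr. Qed.

Lemma frob0l A : frob 0 A = 0.
Proof. by rewrite /frob big1 // => i _; rewrite big1 // => j _; rewrite mxE mul0r. Qed.

Lemma sqnorm_ge0 A : 0 <= sqnorm A.
Proof. apply: sumr_ge0 => i _; apply: sumr_ge0 => j _; by rewrite -expr2 sqr_ge0. Qed.

Lemma sqnormD A B : sqnorm (A + B) = sqnorm A + 2 * frob A B + sqnorm B.
Proof. rewrite /sqnorm !frobDl !frobDr (frobC B A); ring. Qed.

Lemma sqnormB A B : sqnorm (A - B) = sqnorm A - 2 * frob A B + sqnorm B.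
Proof. rewrite /sqnorm !frobBl !frobBr (frobC B A); ring. Qed.

Lemma sqnormZ a A : sqnorm (a *: A) = a ^+ 2 * sqnorm A.
Proof. rewrite /sqnorm frobZl frobZr; ring. Qed.

Lemma sqnorm0 : sqnorm (0 : 'M[R]_(K, d)) = 0.
Proof. by rewrite /sqnorm frob0l. Qed.

End Frob.


Lemma prox3 (R : realType) (K d : nat) (eta D : R) upd
  (hupd : @is_prox_update R K d eta D upd) W G V (hV : sqnorm V <= D ^+ 2) :
  eta * frob G (upd W G) + 2^-1 * sqnorm (upd W G - W)
    + 2^-1 * sqnorm (V - upd W G)
  <= eta * frob G V + 2^-1 * sqnorm (V - W).
Proof.
have [hS hmin] := hupd W G.
move: hS hmin; set S := upd W G => hS hmin.
have eV : V = S + (V - S) by rewrite addrC subrK.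
move: (V - S) eV => Dl eV.
move: (sqnorm_ge0 Dl) => hB.
have key : forall l, 0 <= l -> l <= 1 ->
    0 <= l * (eta * frob G Dl + frob (S - W) Dl) + l ^+ 2 * sqnorm Dl / 2.
  move=> l l0 l1.
  have feas : sqnorm (S + l *: Dl) <= D ^+ 2.
    have hV' := hV; rewrite eV sqnormD in hV'.
    rewrite sqnormD frobZr sqnormZ.
    have h1 : 0 <= l * (1 - l) * sqnorm Dl
      by apply: mulr_ge0 => //; apply: mulr_ge0; lra.
    have h2 := ler_wpM2l l0 hV'.
    have h3 : (1 - l) * sqnorm S <= (1 - l) * D ^+ 2 by apply: ler_wpM2l => //; lra.
    lra.
  have := hmin _ feas.
  have -> : S + l *: Dl - W = (S - W) + l *: Dl by rewrite addrAC.
  rewrite (sqnormD (S - W)) frobDr !frobZr sqnormZ.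
  move=> h; lra.
have hA : 0 <= eta * frob G Dl + frob (S - W) Dl.
  move: key; move: (eta * frob G Dl + frob (S - W) Dl) => A key.
  rewrite leNgt; apply/negP => hA.
  have hBA : 0 < sqnorm Dl - A by lra.
  have el : (- A / (sqnorm Dl - A)) * (sqnorm Dl - A) = - A by rewrite mulfVK // gt_eqF.
  move: el; move: (- A / (sqnorm Dl - A)) => l el.
  have l0 : 0 < l by nra.
  have l1 : l <= 1 by nra.
  have := key l (ltW l0) l1.
  nra.
rewrite {1 2}eV.
have -> : S + Dl - W = (S - W) + Dl by rewrite addrAC.
rewrite (sqnormD (S - W)) frobDr; lra.
Qed.


Lemma fmax_ge (R : realType) (K : nat) (P : pred 'I_K) (F : 'I_K -> R) i :
  P i -> F i <= fmax P F.
Proof.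
move=> Pi; rewrite /fmax (bigD1 i) //=.
by rewrite le_max lexx.
Qed.

Lemma fmax_le (R : realType) (K : nat) (P : pred 'I_K) (F : 'I_K -> R) c i0 :
  P i0 -> (forall i, P i -> F i <= c) -> fmax P F <= c.
Proof.
move=> P0 hc; rewrite /fmax.
apply: (big_ind (fun v => v <= c)).
- apply: le_trans (hc _ P0).
  apply: le_trans (_ : - `|F i0| <= _); last by rewrite lerNl -normrN ler_norm.
  rewrite lerN2 (bigD1 i0) //= lerDl; apply: sumr_ge0 => *; exact: normr_ge0.
- by move=> x y hx hy; rewrite ge_max hx hy.
- exact: hc.
Qed.

Lemma sum_ind1 (R : realType) (K : nat) (a : 'I_K) (c : 'I_K -> R) :
  \sum_i (i == a)%:R * c i = c a.
Proof.
rewrite (bigD1 a) //= eqxx mul1r big1 ?addr0 // => i /negbTE ->; by rewrite mul0r.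
Qed.

Lemma frob_gmat (R : realType) (K d : nat) (a b : 'I_K) (x : 'rV[R]_d)
   (M : 'M[R]_(K, d)) :
  frob (\matrix_(i < K, j < d) (((i == a)%:R - (i == b)%:R) * x 0 j)) M
  = score M x a - score M x b.
Proof.
rewrite /frob /score.
transitivity (\sum_i ((i == a)%:R - (i == b)%:R) * \sum_j M i j * x 0 j).
  apply eq_bigr => i _; rewrite mulr_sumr; apply eq_bigr => j _; rewrite mxE; ring.
under eq_bigr do rewrite mulrBl.
by rewrite sumrB !sum_ind1.
Qed.


Lemma margin_kt (R : realType) (K d : nat) kt (hkt : @is_argmax_other_rule R K d kt)
   W x y : margin W x y = score W x y - score W x (kt W x y).
Proof.
have [hne hle] := hkt W x y.
rewrite /margin; congr (_ - _); apply/le_anti/andP; split.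
- exact: (fmax_le hne).
- exact: (fmax_ge _ hne).
Qed.

Lemma margin_le (R : realType) (K d : nat) W (x : 'rV[R]_d) (y k : 'I_K) :
  k != y -> margin W x y <= score W x y - score W x k.
Proof. by move=> hk; rewrite /margin lerB // (fmax_ge _ hk). Qed.

Lemma margin_facts (R : realType) (K d : nat) ys (hys : @is_argmax_rule R K d ys)
  kt (hkt : @is_argmax_other_rule R K d kt) W x y :
  [/\ 0 <= mstar W x, margin W x (ys W x) = mstar W x &
      (y != ys W x -> margin W x y <= - mstar W x)].
Proof.
set y0 := ys W x.
have m0 : 0 <= margin W x y0.
  by rewrite (margin_kt hkt) subr_ge0 hys.
have hms : mstar W x = margin W x y0.
  apply/le_anti/andP; split.
  - apply: (@fmax_le _ _ predT _ _ y0) => // k _.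
    have [->|hk] := eqVneq k y0; first by [].
    apply: le_trans (margin_le W x (_ : y0 != k)) _; first by rewrite eq_sym.
    have := hys W x k; rewrite -/y0 => hh; lra.
  - exact: (@fmax_ge _ _ predT).
split => //; first by rewrite hms.
move=> hy; rewrite hms.
have h1 := margin_le W x hy.
have h2 := margin_le W x (_ : y0 != y); rewrite eq_sym in h2; have := h2 hy.
lra.
Qed.


Lemma round1 (R : realType) (K d : nat) (X : R) (hK : (2 <= K)%N) (hX : 0 < X)
  (x : 'rV[R]_d) (hx : vsqnorm x <= X ^+ 2)
  ys (hys : @is_argmax_rule R K d ys)
  kt (hkt : @is_argmax_other_rule R K d kt) W y U :
  (1 - pprob 0 ys W x y) + geta K X / 2 * sqnorm (grad ys kt W x y)
   + frob (grad ys kt W x y) U - frob (grad ys kt W x y) W <= loss ys W x y U.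
Proof.
have [ms0 emys hy] := margin_facts hys hkt W x y.
have hk : (2 : R) <= K%:R by rewrite (ler_nat R 2 K).
set k := K%:R in hk *.
have kne : k != 0 by apply/eqP => h; rewrite h in hk; lra.
set b := k^-1.
have b0 : 0 < b by rewrite invr_gt0; lra.
have bk : b * k = 1 by rewrite mulVf.
have b1 : b <= 2^-1.
  rewrite /b lef_pV2 ?posrE //; lra.
have eb : gbeta R K = b by rewrite /gbeta div1r.
have eta0 : 0 <= geta K X.
  rewrite /geta eb; apply: divr_ge0; first lra.
  apply: mulr_ge0; [lra| exact: sqr_ge0].
have etaX : geta K X * X ^+ 2 = (1 - b) * b.
  rewrite /geta eb -/k /b; field; apply/andP; split => //; exact: lt0r_neq0.
have hetax : geta K X * vsqnorm x <= (1 - b) * b.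
  by rewrite -etaX; apply: ler_wpM2l.
set ms := mstar W x in ms0 emys hy.
set y0 := ys W x in emys hy.
have epp : pprob 0 ys W x y =
    (1 - Num.max (gap W x) 0) * (y == y0)%:R + Num.max (gap W x) 0 * b.
  by rewrite /pprob /b -/k.
rewrite epp /gap eb -/ms /loss /grad /active eb -/ms.
have [hmsb|hmsb] := leP ms b.
-
  rewrite /= (_ : Num.max (false%:R) ms = ms); last by apply/max_idPr.
  rewrite (_ : Num.max (1 - ms) 0 = 1 - ms); last by apply/max_idPl; lra.
  rewrite (frob_gmat (kt W x y) y x) /sqnorm !frob_gmat.
  have [ktne _] := hkt W x y.
  set g := \matrix_(i, j) _.
  have sg1 : score g x (kt W x y) = vsqnorm x.
    rewrite /score /vsqnorm; apply eq_bigr => j _.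
    by rewrite mxE eqxx (negbTE ktne) subr0 mul1r expr2.
  have sg2 : score g x y = - vsqnorm x.
    rewrite /score /vsqnorm -sumrN; apply eq_bigr => j _.
    by rewrite mxE eq_sym (negbTE ktne) eqxx sub0r mulN1r expr2 mulNr.
  rewrite sg1 sg2.
  have hmU := margin_le U x ktne.
  have hmW := margin_kt hkt W x y.
  apply: le_trans (_ : 1 - margin U x y <= _); last by rewrite /hinge le_max lexx.
  have [ey|ney] := eqVneq y y0.
  + rewrite -ey in emys; rewrite (_ : true%:R = 1) //.
    have : ms * b <= b * b by rewrite ler_pM2r.
    nra.
  + rewrite (_ : false%:R = 0) //.
    have := hy ney.
    have : ms * b <= ms by nra.
    nra.
-
  rewrite /= (_ : Num.max (true%:R) ms = Num.max 1 ms) //.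
  rewrite (_ : Num.max (1 - Num.max 1 ms) 0 = 0); last first.
    by apply/max_idPr; rewrite subr_le0 le_max lexx.
  rewrite -/y0.
  have [ey|ney] := eqVneq y y0.
  + rewrite /= (_ : true%:R = 1) // /sqnorm !frob0l; lra.
  + rewrite /= (_ : false%:R = 0) //.
    rewrite (frob_gmat (kt W x y) y x) /sqnorm !frob_gmat.
    have [ktne _] := hkt W x y.
    set g := \matrix_(i, j) _.
    have sg1 : score g x (kt W x y) = vsqnorm x.
      rewrite /score /vsqnorm; apply eq_bigr => j _.
      by rewrite mxE eqxx (negbTE ktne) subr0 mul1r expr2.
    have sg2 : score g x y = - vsqnorm x.
      rewrite /score /vsqnorm -sumrN; apply eq_bigr => j _.
      by rewrite mxE eq_sym (negbTE ktne) eqxx sub0r mulN1r expr2 mulNr.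
    rewrite sg1 sg2.
    have hmU := margin_le U x ktne.
    have hmW := margin_kt hkt W x y.
    apply: le_trans (_ : 1 - margin U x y <= _); last by rewrite /hinge le_max lexx.
    have := hy ney.
    nra.
Qed.


Lemma geta_gt0 (R : realType) (K : nat) (X : R) (hK : (2 <= K)%N) (hX : 0 < X) :
  0 < geta K X.
Proof.
have hk : (2 : R) <= K%:R by rewrite (ler_nat R 2 K).
rewrite /geta /gbeta; apply: divr_gt0.
- rewrite subr_gt0 div1r invf_lt1; lra.
- apply: mulr_gt0; [lra| exact: exprn_gt0].
Qed.

Lemma round2 (R : realType) (K d : nat) (X D : R) (hK : (2 <= K)%N) (hX : 0 < X)
  (x : 'rV[R]_d) (hx : vsqnorm x <= X ^+ 2)
  ys (hys : @is_argmax_rule R K d ys)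
  kt (hkt : @is_argmax_other_rule R K d kt) upd
  (hupd : is_prox_update (geta K X) D upd) W y U (hU : sqnorm U <= D ^+ 2) :
  geta K X * (1 - pprob 0 ys W x y) <=
  geta K X * loss ys W x y U + 2^-1 * sqnorm (U - W)
   - 2^-1 * sqnorm (U - upd W (grad ys kt W x y)).
Proof.
have r1 := round1 hK hX hx hys hkt W y U.
have e0 := geta_gt0 hK hX.
move: r1 (prox3 hupd W (grad ys kt W x y) hU).
set g := grad ys kt W x y; set W' := upd W g.
move=> r1 p3.
have r1' := ler_wpM2l (ltW e0) r1.
have yg := sqnorm_ge0 (geta K X *: g + (W' - W)).
rewrite sqnormD sqnormZ frobZl frobBr in yg.
have ee : geta K X * (geta K X / 2 * sqnorm g) = 2^-1 * (geta K X ^+ 2 * sqnorm g) by ring.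
move: r1'; rewrite !mulrDr ?mulrN ee => r1'.
lra.
Qed.


Lemma det_path (R : realType) (K d : nat) (X D : R) (hK : (2 <= K)%N) (hX : 0 < X)
  (xe : seq 'I_K -> 'rV[R]_d) (ye : seq 'I_K -> 'I_K)
  (hxe : forall h, vsqnorm (xe h) <= X ^+ 2)
  ys (hys : @is_argmax_rule R K d ys)
  kt (hkt : @is_argmax_other_rule R K d kt) upd
  (hupd : is_prox_update (geta K X) D upd) U (hU : sqnorm U <= D ^+ 2)
  (h : seq 'I_K) n :
  geta K X * \sum_(t < n) (1 - pprob 0 ys (Witer xe ye ys kt upd t h)
                              (xe (take t h)) (ye (take t h)))
  <= geta K X * \sum_(t < n) loss ys (Witer xe ye ys kt upd t h)
                              (xe (take t h)) (ye (take t h)) U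
     + 2^-1 * sqnorm U - 2^-1 * sqnorm (U - Witer xe ye ys kt upd n h).
Proof.
elim: n => [|n IH].
  by rewrite !big_ord0 /= subr0 !mulr0 add0r subrr.
rewrite !big_ord_recr /= !mulrDr.
have := round2 hK hX (hxe (take n h)) hys hkt hupd (Witer xe ye ys kt upd n h)
   (ye (take n h)) hU.
lra.
Qed.


Section Tower.
Variables (R : realType) (T0 : finType) (q : seq T0 -> T0 -> R).
Hypothesis hq : forall s, \sum_k q s k = 1.

Definition rc n (p : n.-tuple T0 * T0) : n.+1.-tuple T0 := [tuple of rcons p.1 p.2].
Definition unrc n (t : n.+1.-tuple T0) : n.-tuple T0 * T0 :=
  ([tuple of belast (thead t) (behead t)], last (thead t) (behead t)).

Lemma tuple_eta_seq n (t : n.+1.-tuple T0) : (t : seq T0) = thead t :: behead t.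
Proof. by rewrite {1}(tuple_eta t). Qed.

Lemma sum_tuple_rcons n (F : n.+1.-tuple T0 -> R) :
  \sum_(t : n.+1.-tuple T0) F t = \sum_(h : n.-tuple T0) \sum_(x : T0) F (rc (h, x)).
Proof.
rewrite pair_big /= (reindex (@rc n)) //.
exists (@unrc n) => [[h x] _ | t _].
- rewrite /unrc /rc.
  have e : rcons (belast (thead [tuple of rcons h x]) (behead [tuple of rcons h x]))
              (last (thead [tuple of rcons h x]) (behead [tuple of rcons h x]))
           = rcons h x.
    by rewrite -lastI -tuple_eta_seq.
  case/rcons_inj: e => e1 e2.
  by rewrite e2; congr (_, _); apply: val_inj; rewrite /= e1.
- apply: val_inj; rewrite /rc /unrc /= -lastI.
  by rewrite -tuple_eta_seq.
Qed.

Definition PP n (h : n.-tuple T0) := \prod_(t < n) q (take t h) (tnth h t).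
Definition EE n (f : n.-tuple T0 -> R) := \sum_(h : n.-tuple T0) PP h * f h.

Lemma sum_rc n (h : n.-tuple T0) x (psi : seq T0 -> T0 -> R) :
  \sum_(t < n.+1) psi (take t (rc (h, x))) (tnth (rc (h, x)) t)
  = \sum_(t < n) psi (take t h) (tnth h t) + psi h x.
Proof.
rewrite big_ord_recr /=; congr (_ + _).
- apply eq_bigr => t _ /=.
  have ht : (t <= size h)%N by rewrite size_tuple ltnW.
  rewrite -cats1 takel_cat //; congr (psi _ _).
  rewrite !(tnth_nth x) /= -?cats1 nth_cat size_tuple ltn_ord //.
- rewrite -cats1 takel_cat ?size_tuple // take_oversize ?size_tuple // (tnth_nth x) /= -?cats1.
  by rewrite nth_cat size_tuple ltnn subnn.
Qed.

Lemma prod_rc n (h : n.-tuple T0) x :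
  \prod_(t < n.+1) q (take t (rc (h, x))) (tnth (rc (h, x)) t)
  = \prod_(t < n) q (take t h) (tnth h t) * q h x.
Proof.
rewrite big_ord_recr /=; congr (_ * _).
- apply eq_bigr => t _ /=.
  have ht : (t <= size h)%N by rewrite size_tuple ltnW.
  rewrite -cats1 takel_cat //; congr (q _ _).
  rewrite !(tnth_nth x) /= -?cats1 nth_cat size_tuple ltn_ord //.
- rewrite -cats1 takel_cat ?size_tuple // take_oversize ?size_tuple // (tnth_nth x) /= -?cats1.
  by rewrite nth_cat size_tuple ltnn subnn.
Qed.

Lemma EE_rc n (f : n.+1.-tuple T0 -> R) :
  EE f = \sum_(h : n.-tuple T0) PP h * \sum_x q h x * f (rc (h, x)).
Proof.
rewrite /EE sum_tuple_rcons; apply eq_bigr => h _.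
rewrite mulr_sumr; apply eq_bigr => x _; rewrite /PP prod_rc; ring.
Qed.

Lemma EE1 n : EE (fun _ : n.-tuple T0 => 1) = 1.
Proof.
elim: n => [|n IH].
  rewrite /EE (eq_bigr (fun _ => 1)); last by move=> h _; rewrite /PP big_ord0 mulr1.
  by rewrite sumr_const card_tuple expn0.
rewrite EE_rc -[RHS]IH /EE; apply eq_bigr => h _ /=.
congr (_ * _); rewrite -[RHS](hq h); apply eq_bigr => x _; by rewrite mulr1.
Qed.

Lemma tower n (phi : seq T0 -> T0 -> R) :
  EE (fun h : n.-tuple T0 => \sum_(t < n) phi (take t h) (tnth h t))
  = EE (fun h : n.-tuple T0 => \sum_(t < n) \sum_k q (take t h) k * phi (take t h) k).
Proof.
elim: n => [|n IH].
  by rewrite /EE; apply eq_bigr => h _; rewrite !big_ord0.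
rewrite !EE_rc.
under eq_bigr do under eq_bigr do rewrite (sum_rc _ _ phi).
transitivity (EE (fun h : n.-tuple T0 => \sum_(t < n) phi (take t h) (tnth h t))
   + \sum_(h : n.-tuple T0) PP h * \sum_k q h k * phi h k).
  rewrite /EE -big_split; apply eq_bigr => h _ /=.
  rewrite -mulrDr; congr (_ * _).
  under eq_bigr do rewrite mulrDr.
  by rewrite big_split /= -mulr_suml hq mul1r.
rewrite IH.
under [RHS]eq_bigr do under eq_bigr do rewrite (sum_rc _ _ (fun s _ => \sum_k q s k * phi s k)).
rewrite /EE -big_split; apply eq_bigr => h _ /=.
rewrite -mulrDr; congr (_ * _).
by rewrite -mulr_suml hq mul1r.
Qed.

End Tower.


Lemma Witer_take (R : realType) (K d : nat) xe ye ys kt upd n m (h : seq 'I_K) :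
  (n <= m)%N -> @Witer R K d xe ye ys kt upd n (take m h) = Witer xe ye ys kt upd n h.
Proof.
elim: n => [//|n IH] hnm /=.
by rewrite IH ?(ltnW hnm) // take_takel // ltnW.
Qed.

Lemma pprob_ge0 (R : realType) (K d : nat) (hK : (0 < K)%N) (ys : 'M[R]_(K,d) -> 'rV[R]_d -> 'I_K) (W : 'M[R]_(K,d)) (x : 'rV[R]_d) (k : 'I_K) :
  0 <= pprob 0 ys W x k.
Proof.
rewrite /pprob.
have c0 : 0 <= Num.max (gap W x) 0 by rewrite le_max lexx orbT.
have c1 : Num.max (gap W x) 0 <= 1.
  rewrite ge_max ler01 andbT /gap lerBlDr lerDl le_max; apply/orP; left.
  by case: (_ < _)%R.
apply: addr_ge0; apply: mulr_ge0 => //; first by rewrite subr_ge0.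
by rewrite invr_ge0 ler0n.
Qed.

Lemma pprob_sum (R : realType) (K d : nat) (hK : (0 < K)%N) (ys : 'M[R]_(K,d) -> 'rV[R]_d -> 'I_K) (W : 'M[R]_(K,d)) (x : 'rV[R]_d) :
  \sum_k pprob 0 ys W x k = 1.
Proof.
rewrite /pprob big_split /= -mulr_sumr.
have -> : \sum_(i < K) ((i == ys W x)%:R : R) = 1.
  by rewrite -[RHS](sum_ind1 (ys W x) (fun _ => 1 : R)); apply eq_bigr => i _; rewrite mulr1.
rewrite sumr_const card_ord; set c := Num.max _ _.
rewrite -[c / K%:R *+ K]mulr_natr; field; by rewrite pnatr_eq0 -lt0n.
Qed.


Unset Implicit Arguments. Set Strict Implicit.

Lemma sum_neq (R : realType) (K : nat) (q : 'I_K -> R) y :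
  \sum_k q k * (k != y)%:R = \sum_k q k - q y.
Proof.
rewrite [in RHS](bigD1 y) //= addrC addrK (bigD1 y) //= eqxx mulr0 add0r.
by apply eq_bigr => i ->; rewrite mulr1.
Qed.

Theorem theorem2 (R : realType) (K d T : nat) (X D : R)
  (hK : (2 <= K)%N) (hd : (1 <= d)%N) (hT : (1 <= T)%N)
  (hX : 0 < X) (hD : 0 < D)
  (xe : seq 'I_K -> 'rV[R]_d) (ye : seq 'I_K -> 'I_K)
  (hxe : forall h, vsqnorm (xe h) <= X ^+ 2)
  (ys : 'M[R]_(K, d) -> 'rV[R]_d -> 'I_K) (hys : is_argmax_rule ys)
  (kt : 'M[R]_(K, d) -> 'rV[R]_d -> 'I_K -> 'I_K) (hkt : is_argmax_other_rule kt)
  (upd : 'M[R]_(K, d) -> 'M[R]_(K, d) -> 'M[R]_(K, d))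
  (hupd : is_prox_update (geta K X) D upd)
  (U : 'M[R]_(K, d)) (hU : sqnorm U <= D ^+ 2) :
  Expect (T := T) 0 xe ye ys kt upd (@mistakes R K T ye)
  <= Expect (T := T) 0 xe ye ys kt upd (cum_loss (T := T) xe ye ys kt upd U)
     + (K%:R ^+ 2 * X ^+ 2 * sqnorm U) / (2 * (K%:R - 1)).
Proof.
have K0 : (0 < K)%N by apply: leq_trans hK.
pose q := fun (s : seq 'I_K) k =>
  pprob 0 ys (Witer xe ye ys kt upd (size s) s) (xe s) k.
have hq : forall s, \sum_k q s k = 1 by move=> s; exact: pprob_sum.
have eq_q : forall (h : T.-tuple 'I_K) (t : 'I_T) k,
    q (take t h) k = pprob 0 ys (Witer xe ye ys kt upd t h) (xe (take t h)) k.
  move=> h t k; rewrite /q size_takel; last by rewrite size_tuple ltnW.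
  by rewrite Witer_take.
have hE : forall f, Expect (T := T) 0 xe ye ys kt upd f = EE q f.
  move=> f; rewrite /Expect /EE; apply eq_bigr => h _; congr (_ * _).
  by rewrite /path_prob /PP; apply eq_bigr => t _; rewrite eq_q.
have PP0 : forall h : T.-tuple 'I_K, 0 <= PP q h.
  by move=> h; apply: prodr_ge0 => t _; exact: pprob_ge0.
rewrite !hE /mistakes (tower hq T (fun s k => ((k != ye s)%:R : R))).
set C := (K%:R ^+ 2 * X ^+ 2 * sqnorm U) / (2 * (K%:R - 1)).
have e0 := geta_gt0 hK hX.
have eC : geta K X * C = 2^-1 * sqnorm U.
  have hk : (2 : R) <= K%:R by rewrite (ler_nat R 2 K).
  rewrite /C /geta /gbeta; field.
  apply/and3P; split; [lra | exact: lt0r_neq0 | lra].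
have pw : forall h : T.-tuple 'I_K,
    \sum_(t < T) \sum_k q (take t h) k * (k != ye (take t h))%:R
    <= cum_loss (T := T) xe ye ys kt upd U h + C.
  move=> h.
  rewrite -(ler_pM2l e0) mulrDr eC.
  have := det_path hK hX ye hxe hys hkt hupd hU (tval h) T.
  have := sqnorm_ge0 (U - Witer xe ye ys kt upd T h).
  have -> : \sum_(t < T) \sum_k q (take t h) k * (k != ye (take t h))%:R
     = \sum_(t < T) (1 - pprob 0 ys (Witer xe ye ys kt upd t h)
                              (xe (take t h)) (ye (take t h))).
    by apply eq_bigr => t _; rewrite sum_neq hq eq_q.
  rewrite /cum_loss; lra.
apply: le_trans (_ : EE q (fun h => cum_loss (T := T) xe ye ys kt upd U h + C) <= _).
  by apply: ler_sum => h _; apply: ler_wpM2l.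
rewrite /EE; under eq_bigr do rewrite mulrDr.
rewrite big_split /= lerD2l -mulr_suml.
have := EE1 hq T; rewrite /EE; under eq_bigr do rewrite mulr1.
by move=> ->; rewrite mul1r.
Qed.
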